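(* In the setting of the context, suppose Assumption (A) holds with data $(g,n,m,d)$. Then there exist $a_1,a_2\in\mathbb R_+$ such that for all $z\in\mathsf Z$: (1) $|v^*(z)|\le\sum_{t=0}^{n-1}\beta^t\mathbb E_z[|r(Z_t)|+|c(Z_t)|]+a_1g(z)+a_2$; (2) $|\psi^*(z)|\le\sum_{t=1}^{n-1}\beta^t\mathbb E_z|r(Z_t)|+\sum_{t=0}^{n-1}\beta^t\mathbb E_z|c(Z_t)|+a_1g(z)+a_2$.
   Context: $P$ is a stochastic kernel on a measurable space $(\mathsf Z,\mathscr Z)$, $P^0(z,\cdot)=\delta_z$, $P^n(z,B)=\int P(z',B)P^{n-1}(z,dz')$; $(Z_t)$ is a time-homogeneous Markov process with kernel $P$ adapted to a filtration; $\mathbb E_zh(Z_t)=\int h\,dP^t(z,\cdot)$. $\beta\in(0,1)$; $r,c:\mathsf Z\to\mathbb R$ measurable. $v^*(z)=\sup_\tau\mathbb E_z\{\sum_{t=0}^{\tau-1}\beta^tc(Z_t)+\beta^\tau r(Z_\tau)\}$ over a.s. finite $\mathbb N_0$-valued stopping times, $\psi^*(z)=c(z)+\beta\int v^*(z')P(z,dz')$. Assumption (A): there exist measurable $g:\mathsf Z\to\mathbb R_+$, $n\in\mathbb N_0$, $m,d\ge0$ with $\beta m<1$ such that $\max\{\int|r|dP^n(z,\cdot),\int|c|dP^n(z,\cdot)\}\le g(z)$ and $\int g(z')P(z,dz')\le mg(z)+d$ for all $z$. *)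

(* Defs.v *)
From HB Require Import structures.
From mathcomp Require Import all_boot all_order all_algebra.
From mathcomp Require Import all_classical all_reals all_analysis.
Set Implicit Arguments.
Unset Strict Implicit.
Unset Printing Implicit Defensive.
Import Order.TTheory GRing.Theory Num.Theory.
Local Open Scope classical_set_scope.
Local Open Scope ring_scope.
Local Open Scope ereal_scope.

Section Defs.
Context {dZ dO : measure_display} {Z : measurableType dZ}
  {Om : measurableType dO} {R : realType}.

Fixpoint kiter (P : R.-ker Z ~> Z) (n : nat) : Z -> set Z -> \bar R :=
  match n with
  | 0%N => fun z B => @dirac _ Z z R B
  | n'.+1 => fun z B => \int[kiter P n' z]_z' P z' B
  end.

Definition is_filtration (F : nat -> set (set Om)) : Prop :=
  [/\ (forall t, sigma_algebra setT (F t)),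
      (forall t, F t `<=` measurable) &
      (forall s t, (s <= t)%N -> F s `<=` F t)].

(* (X_t) is a time-homogeneous Markov process with kernel P, adapted to F,
   under the family of laws (Pr z) indexed by the initial state z *)
Definition markov_process (P : R.-ker Z ~> Z) (Pr : Z -> probability Om R)
  (F : nat -> set (set Om)) (X : nat -> Om -> Z) : Prop :=
  [/\ is_filtration F,
      (forall t B, measurable B -> F t (X t @^-1` B)),
      (forall z B, measurable B -> Pr z (X 0%N @^-1` B) = \d_z B),
      (forall z t A B, F t A -> measurable B ->
         Pr z (A `&` X t.+1 @^-1` B) = \int[Pr z]_(w in A) P (X t w) B) &
      (* E_z h(Z_t) = \int h dP^t(z,.) (a consequence of the above) *)
      (forall z t (h : Z -> R), measurable_fun setT h ->
         \int[Pr z]_w (h (X t w))%:E = \int[kiter P t z]_x (h x)%:E)].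

(* stopping times with values in N_0 \cup {oo}, None standing for oo *)
Definition stopping_time (F : nat -> set (set Om)) (tau : Om -> option nat)
  : Prop := forall t, F t [set w | tau w = Some t].

(* reward sum_{t<tau} beta^t c(Z_t) + beta^tau r(Z_tau), (set to 0 on the
   null event {tau = oo}) *)
Definition payoff (beta : R) (r c : Z -> R) (X : nat -> Om -> Z)
  (tau : Om -> option nat) (w : Om) : \bar R :=
  match tau w with
  | Some k => ((\sum_(0 <= t < k) beta ^+ t * c (X t w))
               + beta ^+ k * r (X k w))%:E
  | None => 0
  end.

Definition vstar (Pr : Z -> probability Om R) (F : nat -> set (set Om))
  (X : nat -> Om -> Z) (beta : R) (r c : Z -> R) (z : Z) : \bar R :=
  ereal_sup [set \int[Pr z]_w payoff beta r c X tau w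
            | tau in [set tau | stopping_time F tau /\
                                Pr z [set w | tau w = None] = 0]].

Definition psistar (P : R.-ker Z ~> Z) (Pr : Z -> probability Om R)
  (F : nat -> set (set Om)) (X : nat -> Om -> Z) (beta : R) (r c : Z -> R)
  (z : Z) : \bar R :=
  (c z)%:E + beta%:E * \int[P z]_z' vstar Pr F X beta r c z'.

End Defs.

(* Main.v *)
Require Import Defs.
From HB Require Import structures.
From mathcomp Require Import all_boot all_order all_algebra.
From mathcomp Require Import all_classical all_reals all_analysis.
From mathcomp Require Import measurable_realfun lebesgue_integral.
From mathcomp Require Import lra ring.
Import Order.TTheory GRing.Theory Num.Theory.
Local Open Scope classical_set_scope.
Local Open Scope ring_scope.
Local Open Scope ereal_scope.
Section Kit.
Context {dZ : measure_display} {Z : measurableType dZ} {R : realType} (P : R.-pker Z ~> Z).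

Definition Psnd := @kernel.kernel_snd _ _ _ Z Z Z R P.

Fixpoint Kit (n : nat) : R.-sfker Z ~> Z :=
  match n with
  | 0%N => kdirac (@measurable_id _ Z setT)
  | n'.+1 => Kit n' \; Psnd
  end.

Lemma KitE n x : (Kit n x : set Z -> \bar R) = kiter P n x.
Proof. by elim: n x => [//|n IH] x /=; rewrite -IH. Qed.

Lemma Kit_meas n (f : Z -> \bar R) : (forall z, 0 <= f z) -> measurable_fun setT f ->
  measurable_fun setT (fun x => \int[Kit n x]_y f y).
Proof.
move=> f0 mf; apply: measurable_fun_integral_kernel => //.
exact: measurable_kernel.
Qed.

Lemma P_meas (f : Z -> \bar R) : (forall z, 0 <= f z) -> measurable_fun setT f ->
  measurable_fun setT (fun x => \int[P x]_y f y).
Proof.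
move=> f0 mf; apply: measurable_fun_integral_kernel => //.
exact: measurable_kernel.
Qed.

Lemma Kit0 x (f : Z -> \bar R) : measurable_fun setT f -> \int[Kit 0 x]_y f y = f x.
Proof.
move=> mf; rewrite /= /kdirac /= integral_dirac //.
by rewrite diracT mul1e.
Qed.

Lemma KitS n x (f : Z -> \bar R) : (forall z, 0 <= f z) -> measurable_fun setT f ->
  \int[Kit n.+1 x]_y f y = \int[Kit n x]_y \int[P y]_z f z.
Proof.
move=> f0 mf; rewrite /= (integral_kcomp (Kit n) Psnd x f0 mf) //.
Qed.

Lemma Kit1 x (f : Z -> \bar R) : (forall z, 0 <= f z) -> measurable_fun setT f ->
  \int[Kit 1 x]_y f y = \int[P x]_y f y.
Proof.
move=> f0 mf; rewrite KitS // Kit0 //; exact: P_meas.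
Qed.

Lemma KitCK a b x (f : Z -> \bar R) : (forall z, 0 <= f z) -> measurable_fun setT f ->
  \int[Kit (a + b) x]_y f y = \int[Kit b x]_y \int[Kit a y]_z f z.
Proof.
elim: a x f => [|a IH] x f f0 mf.
  by rewrite add0n; apply: eq_integral => y _; rewrite Kit0.
rewrite addSn KitS // IH //; last 2 first.
- by move=> y; exact: integral_ge0.
- exact: P_meas.
by apply: eq_integral => y _; rewrite KitS.
Qed.

End Kit.
Lemma abse_bound (R : realType) (x M : \bar R) : - M <= x -> x <= M -> `|x| <= M.
Proof.
case: x M => [x||] [M||] //= h1 h2.
all: try by rewrite leey.
rewrite lee_fin ler_norml -!lee_fin h1 h2 //.
Qed.

Lemma abse_subge0 (R : realType) (a b M : \bar R) : 0 <= a -> 0 <= b -> a <= M -> b <= M ->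
  `|a - b| <= M.
Proof.
case: a b M => [a||] [b||] [M||] //= a0 b0 aM bM.
all: try by rewrite leey.
rewrite lee_fin ler_norml; rewrite !lee_fin in a0 b0 aM bM.
apply/andP; split; lra.
Qed.

Lemma le_integral_nm d (T : measurableType d) (R : realType) (mu : {measure set T -> \bar R})
  (f1 f2 : T -> \bar R) : (forall x, 0 <= f1 x) -> (forall x, f1 x <= f2 x) ->
  \int[mu]_x f1 x <= \int[mu]_x f2 x.
Proof.
move=> f10 f12; have f20 x : 0 <= f2 x by apply: le_trans (f12 x).
rewrite !ge0_integralTE //=; apply: ereal_sup_le => _ [h hf <-]; exists h => //.
by move=> x; apply: le_trans (f12 x).
Qed.

Lemma abs_int_le d (T : measurableType d) (R : realType) (mu : {measure set T -> \bar R})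
  (f B : T -> \bar R) : (forall x, `|f x| <= B x) ->
  `|\int[mu]_x f x| <= \int[mu]_x B x.
Proof.
move=> fB; rewrite integralE; apply: abse_subge0.
- by apply: integral_ge0 => x _; exact: funepos_ge0.
- by apply: integral_ge0 => x _; exact: funeneg_ge0.
- apply: le_integral_nm => x; first exact: funepos_ge0.
  apply: le_trans (fB x); rewrite ?funeposE ?funenegE.
  case: (f x) => [r||] //=; rewrite ?leey //.
  by rewrite ge_max !lee_fin ler_norm normr_ge0.
- apply: le_integral_nm => x; first exact: funeneg_ge0.
  apply: le_trans (fB x); rewrite ?funeposE ?funenegE.
  case: (f x) => [r||] //=; rewrite ?leey //.
  by rewrite ge_max !lee_fin -normrN ler_norm normr_ge0.
Qed.

Lemma abs_sup_le (R : realType) (S : set (\bar R)) (B : \bar R) :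
  S !=set0 -> (forall y, S y -> `|y| <= B) -> `|ereal_sup S| <= B.
Proof.
move=> [y0 Sy0] hB; apply: abse_bound.
  apply: le_trans (ereal_sup_ubound Sy0).
  rewrite leeNl; apply: le_trans (hB _ Sy0).
  by have := lee_abs (- y0); rewrite abseN.
apply: ge_ereal_sup => y Sy; apply: le_trans (hB _ Sy); exact: lee_abs.
Qed.
Lemma geo_le (R : realType) (q : R) : (0 < q)%R -> (q < 1)%R ->
  \sum_(0 <= k <oo) (q ^+ k)%:E <= ((1 - q)^-1)%:E.
Proof.
move=> q0 q1; apply: lime_le.
  by apply: is_cvg_nneseries => k _ _; rewrite lee_fin exprn_ge0 // ltW.
apply: nearW => N; rewrite sumEFin lee_fin.
have := @geometric_le_lim R N 1 q ler01 q0.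
rewrite ger0_norm ?(ltW q0) // => /(_ q1).
rewrite mul1r /series /= => H; apply: le_trans H.
by apply: ler_sum => k _; rewrite /= mul1r.
Qed.


Lemma final_arith (R : realType) (beta : R) (n : nat) (rho gam : nat -> \bar R)
  (cz gz K a1 a2 : R) :
  (0 < beta)%R -> (0 <= K)%R -> (forall t, 0 <= rho t) -> (forall t, 0 <= gam t) ->
  gam 0%N = `|cz|%:E ->
  (n = 0%N -> `|cz| + beta * K <= a1 * gz + a2)%R ->
  ((0 < n)%N -> rho n + gam n <= (2 * gz)%:E) ->
  ((0 < n)%N -> 2 * beta ^+ n * gz + beta * K <= a1 * gz + a2)%R ->
  `|cz|%:E + beta%:E * (\sum_(0 <= t < n) (beta ^+ t)%:E * (rho t.+1 + gam t.+1) + K%:E)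
  <= \sum_(1 <= t < n) (beta ^+ t)%:E * rho t
     + \sum_(0 <= t < n) (beta ^+ t)%:E * gam t + (a1 * gz + a2)%:E.
Proof.
move=> b0 K0 r0 g0 gam0 H0 Hn Hs.
have bt t : (0 <= beta ^+ t)%R by rewrite exprn_ge0 // ltW.
case: n H0 Hn Hs => [|n] H0 Hn Hs.
  rewrite !big_geq // !add0e -EFinM -EFinD lee_fin; exact: H0.
rewrite big_add1 /=.
rewrite [X in _ <= _ + X + _]big_nat_recl //= gam0.
rewrite [X in beta%:E * (X + _)]big_nat_recr //=.
set A := (\sum_(0 <= i < n) _)%R.
set T := ((beta ^+ n)%:E * _)%E.
have T0 : 0 <= T by rewrite mule_ge0 ?lee_fin ?adde_ge0.
have A0 : 0 <= A by rewrite sume_ge0 // => i _; rewrite mule_ge0 ?lee_fin ?adde_ge0.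
rewrite ge0_muleDr ?adde_ge0 ?lee_fin // ge0_muleDr //.
have -> : beta%:E * A = (\sum_(0 <= i < n) ((beta ^+ i.+1)%:E * rho i.+1)%E)%R +
    (\sum_(0 <= i < n) ((beta ^+ i.+1)%:E * gam i.+1)%E)%R.
  rewrite /A ge0_sume_distrr; last by move=> i _; rewrite mule_ge0 ?lee_fin ?adde_ge0.
  rewrite -big_split /=; apply: eq_bigr => i _.
  by rewrite muleA -EFinM -exprS ge0_muleDr.
have bT : beta%:E * T <= (beta ^+ n.+1 * (2 * gz))%:E.
  rewrite /T muleA -EFinM -exprS EFinM lee_wpmul2l ?lee_fin //; exact: Hn.
rewrite expr0 mul1e.
set Sr := (\sum_(0 <= i < n) _)%R.
set Sg := (\sum_(0 <= i < n) _)%R.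
have -> : `|cz|%:E + (Sr + Sg + beta%:E * T + beta%:E * K%:E) =
  Sr + (`|cz|%:E + Sg) + (beta%:E * T + beta%:E * K%:E).
  by rewrite !addeA (addeC `|cz|%:E).
apply: leeD; first exact: lexx.
apply: le_trans (leeD bT (lexx _)) _.
rewrite -EFinM -EFinD lee_fin.
have := Hs isT; lra.
Qed.

Theorem lemma1 (dZ dO : measure_display) (Z : measurableType dZ)
  (Om : measurableType dO) (R : realType)
  (P : R.-pker Z ~> Z) (Pr : Z -> probability Om R)
  (F : nat -> set (set Om)) (X : nat -> Om -> Z)
  (beta : R) (r c : Z -> R)
  (g : Z -> R) (n : nat) (m dd : R) :
  markov_process P Pr F X ->
  (0 < beta)%R -> (beta < 1)%R ->
  measurable_fun setT r -> measurable_fun setT c ->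
  (* Assumption (A) *)
  measurable_fun setT g -> (forall z, (0 <= g z)%R) ->
  (0 <= m)%R -> (0 <= dd)%R -> (beta * m < 1)%R ->
  (forall z, \int[kiter P n z]_x (`|r x|)%:E <= (g z)%:E) ->
  (forall z, \int[kiter P n z]_x (`|c x|)%:E <= (g z)%:E) ->
  (forall z, \int[P z]_z' (g z')%:E <= (m * g z + dd)%:E) ->
  exists a1 a2 : R, [/\ (0 <= a1)%R, (0 <= a2)%R &
    forall z : Z,
      `| vstar Pr F X beta r c z | <=
        \sum_(0 <= t < n) (beta ^+ t)%:E *
            \int[Pr z]_w (`|r (X t w)| + `|c (X t w)|)%:E
        + (a1 * g z + a2)%:E
    /\
      `| psistar P Pr F X beta r c z | <=
        \sum_(1 <= t < n) (beta ^+ t)%:E * \int[Pr z]_w (`|r (X t w)|)%:E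
        + \sum_(0 <= t < n) (beta ^+ t)%:E * \int[Pr z]_w (`|c (X t w)|)%:E
        + (a1 * g z + a2)%:E].
Proof.
move=> [[sigF FM _] adapt _ _ kiterE] b0 b1 mr mc mg g0 m0 d0 bm hr hc hg.
have mX t : measurable_fun setT (X t).
  by move=> _ B mB; rewrite setTI; apply: FM; exact: adapt.
have EK t z (h : Z -> R) : measurable_fun setT h ->
    \int[Pr z]_w (h (X t w))%:E = \int[Kit P t z]_x (h x)%:E.
  by move=> mh; rewrite kiterE // KitE.
set h0 := ((1 + beta^-1) / 2)%R.
have binv1 : (1 < beta^-1)%R by rewrite invf_gt1.
have bh0 : (beta * h0 < 1)%R.
  rewrite /h0 mulrA mulrDr mulr1 mulfV ?gt_eqF //; lra.
set m' := Num.max m h0.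
have m'1 : (1 < m')%R by rewrite lt_max; apply/orP; right; rewrite /h0; lra.
have mm' : (m <= m')%R by rewrite le_max lexx.
have bm'1 : (beta * m' < 1)%R.
  by rewrite /m' /Num.max; case: ifP.
set q := (beta * m')%R.
have q1 : (q < 1)%R by [].
have qE : q = (beta * m')%R by [].
clearbody q.
have q0 : (0 < q)%R by rewrite qE mulr_gt0 //; lra.
set c0 := (dd / (m' - 1))%R.
have c00 : (0 <= c0)%R by rewrite divr_ge0 //; lra.
have ddc0 : (dd + c0 = m' * c0)%R.
  have hm : (m' - 1 != 0)%R by rewrite subr_eq0 gt_eqF.
  by rewrite /c0; field.
set G := fun x => (g x + c0)%R.
have G0 x : (0 <= G x)%R by rewrite /G addr_ge0.
have mG : measurable_fun setT G by apply: measurable_funD => //; exact: measurable_cst.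
have G0E x : 0 <= (G x)%:E by rewrite lee_fin.
have mGE : measurable_fun setT (fun x => (G x)%:E) by apply/measurable_EFinP.
have PG y : \int[P y]_x (G x)%:E <= (m' * G y)%:E.
  rewrite /G; under eq_integral do rewrite EFinD.
  have h1 : forall x, [set: Z] x -> 0 <= (g x)%:E by move=> x _; rewrite lee_fin.
  have h2 : measurable_fun setT (fun x => (g x)%:E) by apply/measurable_EFinP.
  have h3 : forall x, [set: Z] x -> 0 <= c0%:E by move=> x _; rewrite lee_fin.
  rewrite ge0_integralD //.
  rewrite integral_cst // prob_kernel mule1.
  apply: le_trans (leeD (hg y) (lexx _)) _.
  rewrite -EFinD lee_fin mulrDr -ddc0.
  have := g0 y; have : (m * g y <= m' * g y)%R by rewrite ler_wpM2r.
  lra.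
have Gbound k z : \int[Kit P k z]_x (G x)%:E <= (m' ^+ k * G z)%:E.
  elim: k z => [|k IH] z.
    by rewrite Kit0 ?expr0 ?mul1r //; apply/measurable_EFinP.
  rewrite KitS //.
  apply: le_trans (_ : \int[Kit P k z]_y (m'%:E * (G y)%:E) <= _).
    apply: ge0_le_integral => //.
    - by move=> y _; apply: integral_ge0 => x _.
    - exact: P_meas.
    - by apply: emeasurable_funM => //; exact: measurable_cst.
  rewrite ge0_integralZl_EFin //; last by lra.
  rewrite exprS -mulrA EFinM lee_pmul2l ?lte_fin //; lra.
set hrc := fun x => (`|r x| + `|c x|)%R.
have mar : measurable_fun setT (fun x => `|r x|)%R by apply: measurableT_comp.
have mac : measurable_fun setT (fun x => `|c x|)%R by apply: measurableT_comp.
have marE : measurable_fun setT (fun x => (`|r x|)%:E) by apply/measurable_EFinP.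
have macE : measurable_fun setT (fun x => (`|c x|)%:E) by apply/measurable_EFinP.
have arE x : [set: Z] x -> 0 <= (`|r x|)%:E by move=> _; rewrite lee_fin.
have acE x : [set: Z] x -> 0 <= (`|c x|)%:E by move=> _; rewrite lee_fin.
have mhrc : measurable_fun setT hrc by apply: measurable_funD.
have mhrcE : measurable_fun setT (fun x => (hrc x)%:E) by apply/measurable_EFinP.
have hrc0 x : 0 <= (hrc x)%:E by rewrite lee_fin /hrc addr_ge0.
have inner y : \int[Kit P n y]_x (hrc x)%:E <= (2 * g y)%:E.
  rewrite /hrc; under eq_integral do rewrite EFinD.
  rewrite ge0_integralD //.
  have hrK : \int[Kit P n y]_x (`|r x|)%:E <= (g y)%:E by rewrite KitE; exact: hr.
  have hcK : \int[Kit P n y]_x (`|c x|)%:E <= (g y)%:E by rewrite KitE; exact: hc.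
  apply: le_trans (leeD hrK hcK) _; rewrite -EFinD lee_fin; lra.
have tail k z : \int[Kit P (k + n) z]_x (hrc x)%:E <= (2 * m' ^+ k * G z)%:E.
  rewrite addnC KitCK //.
  apply: le_trans (_ : \int[Kit P k z]_y (2%:E * (G y)%:E) <= _).
    apply: ge0_le_integral => //.
    - by move=> y _; apply: integral_ge0 => x _.
    - exact: Kit_meas.
    - by apply: emeasurable_funM => //; exact: measurable_cst.
    - move=> y _; apply: le_trans (inner y) _; rewrite -EFinM lee_fin /G.
      have := g0 y; lra.
  rewrite ge0_integralZl_EFin // -mulrA EFinM lee_pmul2l ?lte_fin //.
set V1 := (2 * beta ^+ n / (1 - q))%R.
have V10 : (0 <= V1)%R.
  by rewrite /V1 divr_ge0 ?mulr_ge0 ?exprn_ge0 //; lra.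
have hrcX t : measurable_fun setT (fun w => hrc (X t w)).
  exact: measurableT_comp.
have vb z : `|vstar Pr F X beta r c z| <=
    \sum_(0 <= t < n) (beta ^+ t)%:E * \int[Pr z]_w (hrc (X t w))%:E
    + (V1 * G z)%:E.
  rewrite /vstar; apply: abs_sup_le.
    exists (\int[Pr z]_w payoff beta r c X (fun=> Some 0%N) w).
    exists (fun=> Some 0%N) => //; split.
      move=> [|t].
        rewrite (_ : [set w | Some 0%N = Some 0%N] = setT); last first.
          by apply/seteqP; split.
        have [S0 SC _] := sigF 0%N.
        by rewrite -(setD0 [set: Om]); apply: SC.
      rewrite (_ : [set w | Some 0%N = Some t.+1] = set0); last first.
        by apply/seteqP; split => // w.
      by have [] := sigF t.+1.
    rewrite (_ : [set w | Some 0%N = None] = set0) ?measure0 //.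
    by apply/seteqP; split.
  move=> _ [tau [st null] <-].
  set S := fun w => \sum_(0 <= t <oo) ((beta ^+ t * hrc (X t w))%R)%:E.
  have S0 w : 0 <= S w.
    by apply: nneseries_ge0 => t _ _; rewrite lee_fin mulr_ge0 ?exprn_ge0 ?addr_ge0 //; lra.
  apply: le_trans (@abs_int_le _ _ _ _ _ S _) _.
    move=> w; rewrite /payoff; case: (tau w) => [k|]; last by rewrite abse0.
    apply: le_trans (_ : (\sum_(0 <= t < k.+1) (beta ^+ t * hrc (X t w))%R)%:E <= _).
      rewrite lee_fin big_nat_recr //=.
      apply: le_trans (ler_normD _ _) _.
      apply: lerD.
        apply: le_trans (ler_norm_sum _ _ _) _.
        apply: ler_sum => t _; rewrite normrM ger0_norm ?exprn_ge0 //; last lra.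
        apply: ler_wpM2l; first by rewrite exprn_ge0 //; lra.
        rewrite /hrc; have := normr_ge0 (r (X t w)); lra.
      rewrite normrM ger0_norm ?exprn_ge0 //; last lra.
      apply: ler_wpM2l; first by rewrite exprn_ge0 //; lra.
      rewrite /hrc; have := normr_ge0 (c (X k w)); lra.
    rewrite -sumEFin; apply: nneseries_lim_ge => t _ _.
    by rewrite lee_fin mulr_ge0 ?exprn_ge0 ?addr_ge0 //; lra.
  have mterm t : measurable_fun setT (fun w => ((beta ^+ t * hrc (X t w))%R)%:E).
    by apply/measurable_EFinP; apply: measurable_funM => //; exact: measurable_cst.
  have term0 t w : 0 <= ((beta ^+ t * hrc (X t w))%R)%:E.
    by rewrite lee_fin mulr_ge0 ?exprn_ge0 ?addr_ge0 //; lra.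
  rewrite /S integral_nneseries //.
  rewrite (eq_eseriesr (g := fun t => (beta ^+ t)%:E * \int[Pr z]_w (hrc (X t w))%:E)); last first.
    move=> t _; under eq_integral do rewrite EFinM.
    rewrite ge0_integralZl_EFin //; try by [rewrite exprn_ge0 //; lra | move=> w _; rewrite lee_fin addr_ge0 | apply/measurable_EFinP].
  have a0 t : 0 <= (beta ^+ t)%:E * \int[Pr z]_w (hrc (X t w))%:E.
    by rewrite mule_ge0 // ?lee_fin ?exprn_ge0 //; [lra | apply: integral_ge0 => w _; rewrite lee_fin addr_ge0].
  rewrite (nneseries_split 0 n) // add0n -nneseries_addn //.
  apply: leeD => //.
  apply: le_trans (_ : \sum_(0 <= i <oo) ((2 * beta ^+ n * G z)%:E * (q ^+ i)%:E) <= _).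
    apply: lee_nneseries => [i _ _|i _]; first exact: a0.
    rewrite EK //.
    apply: le_trans (_ : (beta ^+ (i + n))%:E * (2 * m' ^+ i * G z)%:E <= _).
      by rewrite lee_wpmul2l // lee_fin exprn_ge0 //; lra.
    by rewrite -!EFinM lee_fin qE exprD exprMn le_eqVlt; apply/orP; left; apply/eqP; ring.
  rewrite nneseriesZl //; last by move=> i _; rewrite lee_fin exprn_ge0 // ltW.
  apply: le_trans (_ : (2 * beta ^+ n * G z)%:E * ((1 - q)^-1)%:E <= _).
    rewrite lee_wpmul2l //; first by rewrite lee_fin !mulr_ge0 ?exprn_ge0 //; lra.
    exact: geo_le.
  by rewrite -EFinM lee_fin /V1 le_eqVlt; apply/orP; left; apply/eqP; ring.
set a1 := (V1 + 2 / (1 - beta * m))%R.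
have bm0 : (0 < 1 - beta * m)%R by lra.
have key1 : (2 <= a1 * (1 - beta * m))%R.
  have hbm : (1 - beta * m != 0)%R by rewrite gt_eqF.
  have -> : (a1 * (1 - beta * m) = V1 * (1 - beta * m) + 2)%R by rewrite /a1; field.
  have : (0 <= V1 * (1 - beta * m))%R by rewrite mulr_ge0 //; lra.
  lra.
have a10 : (0 <= a1)%R by rewrite /a1 addr_ge0 // divr_ge0 //; lra.
set a2 := (V1 * c0 + beta * a1 * dd / (1 - beta))%R.
have a20 : (0 <= a2)%R.
  apply: addr_ge0; first exact: mulr_ge0.
  apply: divr_ge0; last lra.
  by rewrite mulr_ge0 // mulr_ge0 //; lra.
have key2 : (beta * a1 * dd <= (1 - beta) * a2)%R.
  have hb1 : (1 - beta != 0)%R by rewrite subr_eq0 gt_eqF.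
  have -> : ((1 - beta) * a2 = (1 - beta) * (V1 * c0) + beta * a1 * dd)%R by rewrite /a2; field.
  have : (0 <= (1 - beta) * (V1 * c0))%R.
    apply: mulr_ge0; [lra | exact: mulr_ge0 V10 c00].
  lra.
have VG y : (V1 * G y <= a1 * g y + a2)%R.
  rewrite /G /a1 /a2 mulrDr mulrDl.
  have : (0 <= 2 / (1 - beta * m) * g y)%R by rewrite mulr_ge0 // divr_ge0 //; lra.
  have : (0 <= beta * a1 * dd / (1 - beta))%R by rewrite divr_ge0 ?mulr_ge0 //; lra.
  lra.
exists a1, a2; split => // z; split.
  apply: le_trans (vb z) _; apply: leeD; first exact: lexx.
  by rewrite lee_fin VG.
set Bv := fun y => (\sum_(0 <= t < n) (beta ^+ t)%:E * \int[Kit P t y]_x (hrc x)%:E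
  + (a1 * g y + a2)%:E).
have bt t : (0 <= beta ^+ t)%R by rewrite exprn_ge0 // ltW.
have KI0 t y : 0 <= \int[Kit P t y]_x (hrc x)%:E by apply: integral_ge0.
have vB y : `|vstar Pr F X beta r c y| <= Bv y.
  apply: le_trans (vb y) _; apply: leeD; last by rewrite lee_fin VG.
  rewrite le_eqVlt; apply/orP; left; apply/eqP; apply: eq_bigr => t _.
  by rewrite EK.
have mS : measurable_fun setT (fun y => \sum_(0 <= t < n) (beta ^+ t)%:E * \int[Kit P t y]_x (hrc x)%:E).
  apply: emeasurable_sum => t; apply: emeasurable_funM; first exact: measurable_cst.
  exact: Kit_meas.
have S0 y : 0 <= \sum_(0 <= t < n) (beta ^+ t)%:E * \int[Kit P t y]_x (hrc x)%:E.
  by apply: sume_ge0 => t _; rewrite mule_ge0 ?lee_fin.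
have mag : measurable_fun setT (fun y => (a1 * g y + a2)%:E).
  apply/measurable_EFinP; apply: measurable_funD; last exact: measurable_cst.
  by apply: measurable_funM => //; exact: measurable_cst.
have ag0 y : 0 <= (a1 * g y + a2)%:E by rewrite lee_fin addr_ge0 ?mulr_ge0.
set K := (a1 * (m * g z + dd) + a2)%R.
set rho := fun t => \int[Pr z]_w (`|r (X t w)|)%:E.
set gam := fun t => \int[Pr z]_w (`|c (X t w)|)%:E.
have marX t : measurable_fun setT (fun w => (`|r (X t w)|)%:E).
  by apply/measurable_EFinP; apply: measurableT_comp => //; exact: measurableT_comp.
have macX t : measurable_fun setT (fun w => (`|c (X t w)|)%:E).
  by apply/measurable_EFinP; apply: measurableT_comp => //; exact: measurableT_comp.
have rg t : rho t + gam t = \int[Pr z]_w (hrc (X t w))%:E.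
  rewrite /rho /gam /hrc; under [RHS]eq_integral do rewrite EFinD.
  rewrite ge0_integralD //.
have IB : \int[P z]_y Bv y <=
    \sum_(0 <= t < n) (beta ^+ t)%:E * (rho t.+1 + gam t.+1) + K%:E.
  rewrite /Bv ge0_integralD //.
  apply: leeD.
    rewrite ge0_integral_sum //; try by [move=> t y _; rewrite mule_ge0 ?lee_fin |
      move=> t; apply: emeasurable_funM; [exact: measurable_cst | exact: Kit_meas]].
    rewrite le_eqVlt; apply/orP; left; apply/eqP; apply: eq_bigr => t _.
    rewrite ge0_integralZl_EFin //; try exact: Kit_meas.
    rewrite rg EK // -addn1 KitCK // Kit1 //; exact: Kit_meas.
  have h1 : forall x, [set: Z] x -> 0 <= a1%:E * (g x)%:E.
    by move=> x _; rewrite mule_ge0 ?lee_fin.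
  have h2 : measurable_fun setT (fun x => a1%:E * (g x)%:E).
    by apply: emeasurable_funM; [exact: measurable_cst | apply/measurable_EFinP].
  have h3 : forall x, [set: Z] x -> 0 <= a2%:E by move=> x _; rewrite lee_fin.
  have h4 : forall x, [set: Z] x -> 0 <= (g x)%:E by move=> x _; rewrite lee_fin.
  have h5 : measurable_fun setT (fun x => (g x)%:E) by apply/measurable_EFinP.
  under eq_integral do rewrite EFinD EFinM.
  rewrite ge0_integralD // ge0_integralZl_EFin // integral_cst // prob_kernel mule1.
  apply: le_trans (leeD (lee_wpmul2l _ (hg z)) (lexx _)) _; first by rewrite lee_fin.
  by rewrite -EFinM -EFinD.
have K0 : (0 <= K)%R by rewrite /K addr_ge0 // mulr_ge0 // addr_ge0 // mulr_ge0.
rewrite /psistar.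
apply: le_trans (_ : `|c z|%:E + beta%:E *
    (\sum_(0 <= t < n) (beta ^+ t)%:E * (rho t.+1 + gam t.+1) + K%:E) <= _).
  apply: le_trans (lee_abs_add _ _) _; rewrite abseM (@gee0_abs _ beta%:E); last by rewrite lee_fin ltW.
  apply: leeD; first exact: lexx.
  apply: lee_wpmul2l; first by rewrite lee_fin ltW.
  exact: le_trans (@abs_int_le _ _ _ (P z) _ Bv vB) IB.
apply: (@final_arith R beta n rho gam (c z) (g z) K a1 a2) => //.
- by move=> t; apply: integral_ge0 => w _; rewrite lee_fin.
- by move=> t; apply: integral_ge0 => w _; rewrite lee_fin.
- by rewrite /gam (EK 0%N z (fun x => `|c x|)%R) // Kit0.
- move=> n0; have := hc z; rewrite -KitE n0 Kit0 // lee_fin => hcz.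
  have : (0 <= (a1 * (1 - beta * m) - 1) * g z)%R by rewrite mulr_ge0 //; lra.
  rewrite /K; lra.
- move=> _; rewrite rg EK //; exact: inner.
- move=> _.
  have : (0 <= (a1 * (1 - beta * m) - 2) * g z)%R by rewrite mulr_ge0 //; lra.
  have : (beta ^+ n * g z <= g z)%R.
    by rewrite ler_piMl // exprn_ile1 //; lra.
  rewrite /K; lra.
Qed.
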